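(* Let $\lambda=(a,b)$ with $a\ge b\ge1$. Then $$\xi(q)=\sum_k|S_k(\lambda)|q^k=\sum_{i\ge0}|\mathcal D_\lambda(i)|\,(1+q)^i .$$
   Context: $N=a+b$; the shape $(a,b)$ has $a$ boxes in row 1 and $b$ in row 2, left-justified. A row-standard filling uses $1,\dots,N$ once each with rows strictly increasing. Inversion pairs of a row-standard $\tau$: for a box $c$ and $r\ge1$ let $c^{(r)}$ be the box $r$ positions to its right, if it exists. For distinct boxes $c,c'$ in the same column with $\tau(c)<\tau(c')$, let $r\ge1$ be least such that one of $c^{(r)},c'^{(r)}$ does not exist or $\tau(c^{(r)})\ne\tau(c'^{(r)})$; $(c,c')$ is an inversion pair if either (one does not exist and $c$ lies below $c'$) or (both exist and $\tau(c^{(r)})>\tau(c'^{(r)})$). $S_k(\lambda)$: row-standard fillings of shape $\lambda$ with exactly $k$ inversion pairs. A Dyck path of shape $(a,b)$ is a lattice path $\{v_0,\dots,v_{a+b}\}$ from $(0,0)$ to $(a,b)$ with steps $(1,0)$ or $(0,1)$ and every point $(x,y)$ satisfying $y\le x$; $\mathcal D_\lambda$ is the set of these. A return to ground is an index $i\ge1$ with $v_i=(x,x)$ for some $x$; $\mathcal D_\lambda(i)$ is the set of paths in $\mathcal D_\lambda$ with exactly $i$ returns to ground. *)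

(* Defs.v *)
From HB Require Import structures.
From mathcomp Require Import all_boot all_order all_algebra.
Set Implicit Arguments. Unset Strict Implicit. Unset Printing Implicit Defensive.
Import GRing.Theory.

(* Boxes of the shape (a,b) (with a >= b) are encoded as pairs (r, c) of a
   row index r : 'I_2 (0 = first/top row, 1 = second row) and a column
   index c : 'I_a; the box exists iff c < (length of row r). *)
Definition row_len (a b : nat) (r : nat) : nat := if r == 0 then a else b.

Definition in_shape (a b : nat) (x : 'I_2 * 'I_a) : bool :=
  (x.2 < row_len a b x.1)%N.

(* A filling: a finite function on all encoded boxes with values in
   {0,...,N}; boxes outside the shape carry the dummy value 0. *)
Definition filling (a b : nat) := {ffun 'I_2 * 'I_a -> 'I_(a + b).+1}.

Definition row_standard (a b : nat) (t : filling a b) : bool :=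
  [forall x, (~~ in_shape b x) ==> (val (t x) == 0%N)] &&
  [forall x, in_shape b x ==> (val (t x) != 0%N)] &&
  [forall x, forall y, [&& in_shape b x, in_shape b y & t x == t y] ==> (x == y)] &&
  [forall x, forall y,
     [&& in_shape b x, in_shape b y, x.1 == y.1 & (x.2 < y.2)%N]
       ==> (val (t x) < val (t y))%N].

Definition entry (a b : nat) (t : filling a b) (r c : nat) : option nat :=
  if [pick x | [&& in_shape b x, val x.1 == r & val x.2 == c]] is Some x
  then Some (val (t x)) else None.

(* Scan r = r0, r0+1, ... for the least r with c^(r) or c'^(r) missing,
   or with distinct entries there, and decide the inversion condition. *)
Fixpoint inv_scan (a b : nat) (t : filling a b) (rc cc rc' cc' : nat)
    (fuel r : nat) : bool :=
  match fuel with
  | 0 => false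
  | f.+1 =>
    match entry t rc (cc + r), entry t rc' (cc' + r) with
    | Some x, Some y =>
        if x == y then inv_scan t rc cc rc' cc' f r.+1 else (y < x)%N
    | _, _ => (rc' < rc)%N   (* c lies below c' *)
    end
  end.

Definition inversion_pair (a b : nat) (t : filling a b)
    (c c' : 'I_2 * 'I_a) : bool :=
  [&& in_shape b c, in_shape b c', c != c', val c.2 == val c'.2,
      (val (t c) < val (t c'))%N &
      inv_scan t c.1 c.2 c'.1 c'.2 a.+1 1].

Definition ninv (a b : nat) (t : filling a b) : nat :=
  #|[set p : ('I_2 * 'I_a) * ('I_2 * 'I_a) | inversion_pair t p.1 p.2]|.

Definition S_k (a b k : nat) : {set filling a b} :=
  [set t : filling a b | row_standard t && (ninv t == k)].

(* Lattice paths from (0,0) to (a,b) encoded by their step sequence: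
   false = step (1,0), true = step (0,1).  The point v_i is
   (#false in the first i steps, #true in the first i steps). *)
Definition pt_x (n : nat) (p : n.-tuple bool) (i : nat) : nat :=
  count negb (take i p).
Definition pt_y (n : nat) (p : n.-tuple bool) (i : nat) : nat :=
  count id (take i p).

Definition dyck (a b : nat) (p : (a + b).-tuple bool) : bool :=
  (pt_x p (a + b) == a) && (pt_y p (a + b) == b) &&
  [forall i : 'I_(a + b).+1, (pt_y p i <= pt_x p i)%N].

Definition nreturns (n : nat) (p : n.-tuple bool) : nat :=
  #|[set i : 'I_n.+1 | (0 < val i)%N && (pt_x p i == pt_y p i)]|.

Definition D_i (a b i : nat) : {set (a + b).-tuple bool} :=
  [set p : (a + b).-tuple bool | dyck p && (nreturns p == i)].

(* Main.v *)
Require Import Defs.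
From HB Require Import structures.
From mathcomp Require Import all_boot all_order all_algebra.
From mathcomp Require Import zify ring.
Set Implicit Arguments. Unset Strict Implicit. Unset Printing Implicit Defensive.
Import Order.TTheory GRing.Theory Num.Theory.
Local Open Scope ring_scope.

Fixpoint allw (n : nat) : seq (seq bool) :=
  if n is n'.+1 then [seq rcons s x | s <- allw n', x <- [:: false; true]]
  else [:: [::]].

Lemma mem_allw n s : (s \in allw n) = (size s == n).
Proof.
elim: n s => [|n IH] s.
  by rewrite /= inE; case: s.
change (allw n.+1) with [seq rcons s x | s <- allw n, x <- [:: false; true]].
apply/allpairsP/idP.
  by move=> [[s' x] [/= Hs _ ->]]; rewrite size_rcons eqSS -IH.
case/lastP: s => [//|s x]; rewrite size_rcons eqSS => Hs.
by exists (s, x); split => //=; [rewrite IH | case: x].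
Qed.

Lemma allw_uniq n : uniq (allw n).
Proof.
elim: n => [//|n IH].
change (allw n.+1) with [seq rcons s x | s <- allw n, x <- [:: false; true]].
apply: allpairs_uniq => //.
by move=> [s1 x1] [s2 x2] _ _ /= /rcons_inj.
Qed.

Lemma sum_allwS (V : nmodType) n (F : seq bool -> V) :
  \sum_(s <- allw n.+1) F s = \sum_(s <- allw n) (F (rcons s false) + F (rcons s true)).
Proof.
change (allw n.+1) with [seq rcons s x | s <- allw n, x <- [:: false; true]].
rewrite big_allpairs_dep; apply: eq_bigr => s _.
by rewrite big_cons big_seq1.
Qed.

Lemma sum_tuple_allw (V : nmodType) n (F : seq bool -> V) :
  \sum_(p : n.-tuple bool) F p = \sum_(s <- allw n) F s.
Proof.
rewrite -(big_map val xpredT F).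
apply: perm_big; apply: uniq_perm.
- rewrite map_inj_uniq ?index_enum_uniq //; exact: val_inj.
- exact: allw_uniq.
move=> s; rewrite mem_allw; apply/mapP/idP.
  by move=> [p _ ->]; rewrite size_tuple.
move=> Hs; exists (Tuple Hs) => //; by rewrite mem_index_enum.
Qed.

Fixpoint Lp (n : nat) (E : int) (sg : bool) : {poly int} :=
  if n is n'.+1 then
    Lp n' (E - 1) sg + 'X ^+ ((0 <= E) != sg) * Lp n' (E + 1) (0 <= E)
  else (E == 0)%:R.

Fixpoint Rp (n : nat) (E : int) : {poly int} :=
  if n is n'.+1 then
    (if 0 <= E then (1 + 'X) ^+ (E == 0) * (Rp n' (E - 1) + Rp n' (E + 1)) else 0)
  else (E == 0)%:R.

Fixpoint Zp (n : nat) (E : int) : {poly int} :=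
  if n is n'.+1 then (if E == 0 then Rp n'.+1 0 else Zp n' (E - 1))
  else (E == 0)%:R.

Lemma Rp_neg n E : E < 0 -> Rp n E = 0.
Proof.
case: n => [|n] /= HE.
  by rewrite lt_eqF.
by rewrite leNgt HE.
Qed.

Lemma Rp_pos n E : 0 < E -> Rp n.+1 E = Rp n (E - 1) + Rp n (E + 1).
Proof.
move=> HE /=; rewrite ltW //.
by rewrite (_ : (E == 0) = false) ?expr0 ?mul1r //; lia.
Qed.

Lemma Rp_0 n : Rp n.+1 0 = (1 + 'X) * Rp n 1.
Proof. by rewrite /= expr1 (@Rp_neg n (0-1)) // !add0r. Qed.

Lemma Zp_pos n E : 0 < E -> Zp n.+1 E = Zp n (E - 1).
Proof. by move=> HE /=; rewrite (_ : (E == 0) = false) //; lia. Qed.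

Lemma Zp_0 n : Zp n 0 = Rp n 0.
Proof. by case: n. Qed.

Lemma LR n E sg : Lp n E sg =
  if 0 <= E then (if sg then Rp n E else 'X * Rp n E + (1 - 'X) * Zp n E)
  else (if sg then 'X * Rp n (- E) else Rp n (- E)).
Proof.
elim: n E sg => [|n IH] E sg.
  rewrite /=; case: (ltrP E 0) => HE.
    have -> : (E == 0) = false by lia.
    have -> : (- E == 0) = false by lia.
    by case: sg; rewrite ?mulr0.
  by case: sg => //; ring.
rewrite [Lp _ _ _]/= !IH.
case: (ltrP E 0) => HE.
-
  have -> : (0 <= E - 1) = false by lia.
  rewrite (Rp_pos n (_ : 0 < - E)); last by lia.
  have -> : - (E - 1) = - E + 1 by ring.
  case: (ltrP (E + 1) 0) => HE1.
  + have -> : - (E + 1) = - E - 1 by ring.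
    by case: sg => /=; rewrite ?expr1 ?expr0; ring.
  + have E1 : E = -1 by lia.
    rewrite E1 Zp_0 (_ : -1 + 1 = 0 :> int) // (_ : - -1 - 1 = 0 :> int) //.
    by case: sg => /=; rewrite ?expr1 ?expr0; ring.
- case: (ltrP 0 E) => HE0.
  + have -> : (0 <= E - 1) by lia.
    have -> : (0 <= E + 1) by lia.
    rewrite Rp_pos // Zp_pos //.
    by case: sg => /=; rewrite ?expr1 ?expr0; ring.
  + have E0 : E = 0 by lia.
    rewrite E0 (_ : - (0 - 1) = 1 :> int) // Rp_0.
    have e1 : (0 : int) + 1 = 1 by []. have e2 : Rp n (0 - 1) = 0 by rewrite Rp_neg.
    by case: sg => /=; rewrite ?expr1 ?expr0 e1 ?e2; ring.
Qed.

Definition pos (x : bool) (w : seq bool) : seq nat :=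
  [seq k <- iota 0 (size w) | nth false w k == x].

Lemma iotaS0 n : iota 0 n.+1 = rcons (iota 0 n) n.
Proof. by rewrite -addn1 iotaD cats1. Qed.

Lemma pos_rcons x w y :
  pos x (rcons w y) = if y == x then rcons (pos x w) (size w) else pos x w.
Proof.
rewrite /pos size_rcons iotaS0 filter_rcons nth_rcons ltnn eqxx.
have -> : [seq k <- iota 0 (size w) | nth false (rcons w y) k == x] =
          [seq k <- iota 0 (size w) | nth false w k == x].
  by apply: eq_in_filter => k; rewrite mem_iota /= => Hk; rewrite nth_rcons Hk.
by [].
Qed.

Lemma mem_pos x w k : (k \in pos x w) = (k < size w)%N && (nth false w k == x).
Proof. by rewrite mem_filter mem_iota /= andbC. Qed.

Lemma size_pos x w : size (pos x w) = count (pred1 x) w.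
Proof.
rewrite size_filter.
transitivity (count (pred1 x) (map (nth false w) (iota 0 (size w)))).
  by rewrite count_map.
by rewrite -/(mkseq _ _) mkseq_nth.
Qed.

Lemma sorted_pos x w : sorted ltn (pos x w).
Proof. apply: sorted_filter; [exact: ltn_trans | exact: iota_ltn_sorted]. Qed.

Lemma pos_lt x w c : (c < size (pos x w))%N -> (nth 0%N (pos x w) c < size w)%N.
Proof. by move=> Hc; have := mem_nth 0%N Hc; rewrite mem_pos => /andP[]. Qed.

Lemma pos_nth x w c : (c < size (pos x w))%N -> nth false w (nth 0%N (pos x w) c) = x.
Proof. by move=> Hc; have := mem_nth 0%N Hc; rewrite mem_pos => /andP[_ /eqP]. Qed.

Lemma pos_mono x w c d : (c < d)%N -> (d < size (pos x w))%N ->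
  (nth 0%N (pos x w) c < nth 0%N (pos x w) d)%N.
Proof.
move=> Hcd Hd; apply: (sorted_ltn_nth ltn_trans 0%N (sorted_pos x w)) => //.
by rewrite inE (ltn_trans Hcd).
Qed.

Lemma size_posT w : size (pos true w) = count id w.
Proof. by rewrite size_pos; apply: eq_count => x; case: x. Qed.
Lemma size_posF w : size (pos false w) = count negb w.
Proof. by rewrite size_pos; apply: eq_count => x; case: x. Qed.

Definition sgn (w : seq bool) (c : nat) : bool :=
  (nth (size w) (pos false w) c < nth (size w) (pos true w) c)%N.

Lemma sgn_rcons_false w c : (c < count id w)%N -> sgn (rcons w false) c = sgn w c.
Proof.
move=> Hc; rewrite /sgn size_rcons !pos_rcons /=.
rewrite -size_posT in Hc.
have HT : forall d, nth d (pos true w) c = nth 0%N (pos true w) c.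
  by move=> d; apply: set_nth_default.
rewrite !HT; have := pos_lt Hc => Hv.
rewrite nth_rcons; case: ifP => Hf.
  by rewrite (set_nth_default 0%N) // [in RHS](set_nth_default 0%N).
rewrite (nth_default (size w) (_ : size (pos false w) <= c)%N); last by rewrite leqNgt Hf.
by case: eqP => _; lia.
Qed.

Lemma sgn_rcons_true w c : (c < count id w)%N -> sgn (rcons w true) c = sgn w c.
Proof.
move=> Hc; rewrite /sgn size_rcons !pos_rcons /=.
rewrite -size_posT in Hc.
rewrite nth_rcons Hc.
have HT : forall d, nth d (pos true w) c = nth 0%N (pos true w) c.
  by move=> d; apply: set_nth_default.
rewrite !HT; have := pos_lt Hc => Hv.
case: (ltnP c (size (pos false w))) => Hf.
  by rewrite (set_nth_default 0%N) // [in RHS](set_nth_default 0%N).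
rewrite (nth_default _ Hf) (nth_default _ Hf); lia.
Qed.

Lemma sgn_rcons_new w :
  sgn (rcons w true) (count id w) = (count id w < count negb w)%N.
Proof.
rewrite /sgn size_rcons !pos_rcons /= nth_rcons -size_posT.
rewrite ifF ?ltnn // eqxx.
rewrite -size_posF; case: (ltnP (size (pos true w)) (size (pos false w))) => Hf.
  rewrite (set_nth_default 0%N) //; exact: pos_lt.
rewrite nth_default //; lia.
Qed.

Lemma count_rcons (p : pred bool) s x : count p (rcons s x) = (count p s + p x)%N.
Proof. by rewrite -cats1 count_cat /= addn0. Qed.

Definition chgF (f : nat -> bool) (m : nat) (sg : bool) : nat :=
  \sum_(c < m) (f c != (if (c.+1 < m)%N then f c.+1 else sg)).

Definition chgW (sg : bool) (w : seq bool) : nat := chgF (sgn w) (count id w) sg.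

Lemma chgW_rcons_false sg w : chgW sg (rcons w false) = chgW sg w.
Proof.
rewrite /chgW /chgF count_rcons /= addn0.
apply: eq_bigr => c _.
rewrite sgn_rcons_false //; case: ifP => // Hc.
by rewrite sgn_rcons_false.
Qed.

Lemma chgW_rcons_true sg w :
  chgW sg (rcons w true) =
  (chgW (count id w < count negb w)%N w + ((count id w < count negb w)%N != sg))%N.
Proof.
rewrite /chgW /chgF count_rcons /= addn1 big_ord_recr /= ltnn sgn_rcons_new.
congr (_ + _)%N.
apply: eq_bigr => c _.
rewrite sgn_rcons_true //= ltnS.
case: (ltngtP c.+1 (count id w)) => Hc.
- by rewrite sgn_rcons_true.
- by have := ltn_ord c; lia.
- by rewrite Hc sgn_rcons_new.
Qed.

Definition diff (w : seq bool) : int := (count negb w)%:Z - (count id w)%:Z.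

Lemma diff_rcons w x : diff (rcons w x) = diff w + (if x then -1 else 1).
Proof. rewrite /diff !count_rcons; case: x => /=; rewrite ?addn0 ?addn1; lia. Qed.


Lemma Lsum n E sg :
  \sum_(s <- allw n) (if diff s == E then 'X ^+ (chgW sg s) else 0) = Lp n E sg.
Proof.
elim: n E sg => [|n IH] E sg.
  by rewrite /= big_seq1 /chgW /chgF big_ord0 expr0 /diff /= eq_sym; case: eqP.
rewrite sum_allwS /= big_split /= -IH -IH big_distrr /=.
congr (_ + _); apply: eq_bigr => s _.
  rewrite diff_rcons chgW_rcons_false.
  have -> : (diff s + 1 == E) = (diff s == E - 1) by lia.
  by [].
rewrite diff_rcons chgW_rcons_true.
have -> : (diff s + -1 == E) = (diff s == E + 1) by lia.
case: eqP => H; last by rewrite mulr0.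
have -> : (count id s < count negb s)%N = (0 <= E) by move: H; rewrite /diff; lia.
by rewrite exprD mulrC.
Qed.

Definition dyckW (s : seq bool) : bool :=
  all (fun i => count id (take i s) <= count negb (take i s))%N (iota 0 (size s).+1).
Definition retW (s : seq bool) : nat :=
  count (fun i => (0 < i)%N && (count negb (take i s) == count id (take i s)))
        (iota 0 (size s).+1).

Lemma count_rcons_gen T (p : pred T) s x : count p (rcons s x) = (count p s + p x)%N.
Proof. by rewrite -cats1 count_cat /= addn0. Qed.

Lemma take_rcons_le T (s : seq T) x i : (i <= size s)%N -> take i (rcons s x) = take i s.
Proof. by move=> Hi; rewrite -cats1 takel_cat. Qed.

Lemma dyckW_rcons s x : dyckW (rcons s x) = dyckW s && (0 <= diff (rcons s x)).
Proof.
rewrite /dyckW size_rcons iotaS0 all_rcons take_oversize ?size_rcons // andbC.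
congr (_ && _).
  apply: eq_in_all => i; rewrite mem_iota /= => Hi.
  by rewrite take_rcons_le //; lia.
by rewrite /diff; lia.
Qed.

Lemma retW_rcons s x : retW (rcons s x) = (retW s + (diff (rcons s x) == 0))%N.
Proof.
rewrite /retW size_rcons iotaS0 count_rcons_gen take_oversize ?size_rcons //.
congr (_ + _)%N.
  apply: eq_in_count => i; rewrite mem_iota /= => Hi.
  by rewrite take_rcons_le //; lia.
by rewrite /diff /=; lia.
Qed.

Lemma Rsum n E :
  \sum_(s <- allw n) (if (diff s == E) && dyckW s then (1 + 'X) ^+ (retW s) else 0)
  = Rp n E.
Proof.
elim: n E => [|n IH] E.
  by rewrite /= big_seq1 /diff /= /dyckW /retW /= andbT expr0 eq_sym; case: eqP.
rewrite sum_allwS /=.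
case: (boolP (0 <= E)) => HE; last first.
  rewrite big1 // => s _.
  rewrite !dyckW_rcons.
  by rewrite !ifF ?addr0 //; apply/negbTE; apply/negP => /andP[/eqP -> /andP[_ H]];
    rewrite H in HE.
rewrite mulrDr -!IH !big_distrr /= -big_split /=.
apply: eq_bigr => s _.
rewrite !dyckW_rcons !retW_rcons !diff_rcons.
congr (_ + _).
  have -> : (diff s + 1 == E) = (diff s == E - 1) by lia.
  case: (diff s =P E - 1) => H /=; last by rewrite mulr0.
  have -> : (0 <= diff s + 1) by lia.
  rewrite andbT exprD mulrC; case: dyckW => //; last by rewrite mulr0.
  by have -> : (diff s + 1 == 0) = (E == 0) by lia.
have -> : (diff s + -1 == E) = (diff s == E + 1) by lia.
case: (diff s =P E + 1) => H /=; last by rewrite mulr0.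
have -> : (0 <= diff s + -1) by lia.
rewrite andbT exprD mulrC; case: dyckW => //; last by rewrite mulr0.
by have -> : (diff s + -1 == 0) = (E == 0) by lia.
Qed.

Lemma forall_iota n (P : nat -> bool) :
  [forall i : 'I_n, P i] = all P (iota 0 n).
Proof.
apply/forallP/allP => [H x | H i].
  by rewrite mem_iota add0n => /andP[_ Hx]; exact: (H (Ordinal Hx)).
by apply: H; rewrite mem_iota /= ltn_ord.
Qed.

Lemma card_iota m (P : nat -> bool) :
  #|[set i : 'I_m | P i]| = count P (iota 0 m).
Proof.
rewrite -sum1_card (eq_bigl (fun i : 'I_m => P i)); last by move=> i; rewrite inE.
by rewrite -(big_mkord P (fun _ => 1%N)) sum1_count /index_iota subn0.
Qed.

Lemma cnt_size (s : seq bool) : (count negb s + count id s)%N = size s.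
Proof.
rewrite addnC -(count_predC id s); congr (_ + _)%N.
Qed.

Lemma dyck_eq a b (p : (a + b).-tuple bool) :
  dyck p = (diff p == a%:Z - b%:Z) && dyckW p.
Proof.
rewrite /dyck (forall_iota _ (fun i => pt_y p i <= pt_x p i)%N) /pt_x /pt_y.
rewrite !take_oversize ?size_tuple // /dyckW size_tuple.
have := cnt_size p; rewrite size_tuple => Hs.
congr (_ && _); rewrite /diff; apply/andP/eqP.
  by move=> [/eqP H1 /eqP H2]; lia.
by move=> H; split; apply/eqP; lia.
Qed.

Lemma nreturns_eq n (p : n.-tuple bool) : nreturns p = retW p.
Proof.
by rewrite /nreturns (card_iota _ (fun i => (0 < i)%N && (pt_x p i == pt_y p i))) /retW size_tuple.
Qed.

Lemma retW_le s : (retW s <= size s)%N.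
Proof.
rewrite /retW /= -add1n iotaDl.
apply: (leq_trans (count_size _ _)); by rewrite size_map size_iota.
Qed.

Lemma sum_select (V : nmodType) M m (F : nat -> V) (c : bool) : (m < M)%N ->
  \sum_(0 <= i < M) (if c && (m == i) then F i else 0) = if c then F m else 0.
Proof.
case: c; last by move=> _; rewrite big1.
elim: M => [//|M IH] Hm; rewrite big_nat_recr //=.
case: (ltngtP m M) => H.
- by rewrite IH // addr0.
- by lia.
- rewrite H big1_seq ?add0r // => i; rewrite mem_index_iota => Hi.
  by rewrite ifF //; apply/negbTE; lia.
Qed.

Lemma RHS_eq a b :
  \sum_(0 <= i < (a + b).+1) (#|D_i a b i|%:R : int) *: (1 + 'X) ^+ i
  = Rp (a + b) (a%:Z - b%:Z) :> {poly int}.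
Proof.
rewrite -Rsum -sum_tuple_allw.
under eq_bigr => i _ do rewrite scaler_nat -sumr_const big_mkcond /=.
rewrite exchange_big /=; apply: eq_bigr => p _.
under eq_bigr => i _ do rewrite inE.
rewrite sum_select; first by rewrite dyck_eq nreturns_eq.
by rewrite ltnS nreturns_eq; have := retW_le p; rewrite size_tuple.
Qed.

Local Close Scope ring_scope.


Lemma entry_some a b (t : filling a b) (x : 'I_2 * 'I_a) :
  in_shape b x -> entry t x.1 x.2 = Some (val (t x)).
Proof.
move=> Hx; rewrite /entry; case: pickP => [y /and3P[Hy /eqP H1 /eqP H2] | H].
  have -> : y = x by case: x y Hx Hy H1 H2 => [r c] [r' c'] /= _ _ H1 H2; congr pair; apply: val_inj.
  by [].
by have := H x; rewrite Hx !eqxx.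
Qed.

Lemma entry_none a b (t : filling a b) r c :
  (forall x : 'I_2 * 'I_a, in_shape b x -> val x.1 = r -> val x.2 = c -> False) ->
  entry t r c = None.
Proof.
move=> H; rewrite /entry; case: pickP => [y /and3P[Hy /eqP H1 /eqP H2] | //].
by case: (H y Hy H1 H2).
Qed.

Definition sT a b (t : filling a b) (c : nat) : bool :=
  (odflt 0 (entry t 0 c) < odflt 0 (entry t 1 c))%N.

Definition rs_inj a b (t : filling a b) :=
  forall x y, in_shape b x -> in_shape b y -> t x = t y -> x = y.

Lemma rs_injP a b (t : filling a b) : row_standard t -> rs_inj t.
Proof.
case/andP=> /andP[/andP[_ _] /forallP H] _ x y Hx Hy Hxy.
by have /forallP/(_ y) := H x; rewrite Hx Hy Hxy eqxx /= => /eqP.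
Qed.

Lemma column_lemma a b (hab : (b <= a)%N) (t : filling a b) (c : 'I_a) :
  row_standard t ->
  (inversion_pair t (ord0, c) (ord_max, c) + inversion_pair t (ord_max, c) (ord0, c))%N
  = if (c < b)%N then (sT t c != (if (c.+1 < b)%N then sT t c.+1 else true)) : nat else 0%N.
Proof.
move=> Hrs; have Hinj := rs_injP Hrs.
rewrite /inversion_pair /in_shape /row_len /=.
case: ifP => Hcb; last by rewrite !andbF.
have Hca : (c < a)%N by [].
rewrite /sT (entry_some t (x := (ord0, c))) ?(entry_some t (x := (ord_max, c))) //=.
have Hne : nat_of_ord (t (ord0, c)) != nat_of_ord (t (ord_max, c)).
  apply/negP => /eqP /val_inj /Hinj H.
  by have := H Hca Hcb; case.
rewrite Hca eqxx addn1 /=.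
case: ifP => Hc1.
  have Hc1a : (c.+1 < a)%N by apply: leq_trans Hc1 hab.
  rewrite (entry_some t (x := (ord0, Ordinal Hc1a))) //.
  rewrite (entry_some t (x := (ord_max, Ordinal Hc1a))) //=.
  have Hne' : val (t (ord0, Ordinal Hc1a)) != val (t (ord_max, Ordinal Hc1a)).
    apply/negP => /eqP /val_inj /Hinj H.
    by have := H Hc1a Hc1; case.
  rewrite (negbTE Hne') eq_sym (negbTE Hne').
  move: Hne Hne'.
  case: (t (ord0, c)) => u Hu; case: (t (ord_max, c)) => v Hv.
  case: (t (ord0, Ordinal Hc1a)) => u' Hu'; case: (t (ord_max, Ordinal Hc1a)) => v' Hv' /=.
  move=> H1 H2.
  case: (ltngtP u v) => H3; case: (ltngtP u' v') => H4 //=; by lia.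
rewrite (@entry_none _ _ t 1 c.+1); last first.
  move=> [r c'] /= Hs Hr Hc'; move: Hs; rewrite /in_shape /row_len /= Hr /= Hc'.
  by rewrite Hc1.
case: (entry t 0 c.+1) => [v|] /=;
  case: (ltngtP (t (ord0, c)) (t (ord_max, c))) => H3 //=; by move: Hne; rewrite H3 eqxx.
Qed.

Lemma sum_I2 (F : 'I_2 -> nat) : (\sum_(r : 'I_2) F r = F ord0 + F ord_max)%N.
Proof.
rewrite big_ord_recl big_ord_recl big_ord0 addn0; congr (_ + F _)%N; exact: val_inj.
Qed.

Lemma card_set_sum (T : finType) (P : pred T) : #|[set x | P x]| = (\sum_(x : T) P x)%N.
Proof.
rewrite -sum1_card big_mkcond /=; apply: eq_bigr => x _; rewrite inE; by case: (P x).
Qed.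

Lemma sum_pair (I J : finType) (F : I * J -> nat) :
  (\sum_(x : I * J) F x = \sum_(i : I) \sum_(j : J) F (i, j))%N.
Proof. by rewrite pair_bigA; apply: eq_bigr => -[i j]. Qed.

Lemma col_collapse a b (t : filling a b) (x : 'I_2 * 'I_a) (i0 : 'I_2) :
  (\sum_(j0 : 'I_a) (inversion_pair t x (i0, j0) : nat) = inversion_pair t x (i0, x.2))%N.
Proof.
rewrite (bigD1 x.2) //= big1 ?addn0 // => j0 Hj0.
have H : (nat_of_ord x.2 == nat_of_ord j0) = false.
  by apply/negbTE; rewrite eq_sym; exact: Hj0.
by rewrite /inversion_pair /= H !andbF.
Qed.

Lemma sum_narrow a b (hab : (b <= a)%N) (g : nat -> nat) :
  (\sum_(c < a) (if (c < b)%N then g c else 0) = \sum_(c < b) g c)%N.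
Proof.
rewrite -big_mkcond /= (big_ord_narrow hab) /=.
by apply: eq_bigr.
Qed.

Lemma ninv_formula a b (hab : (b <= a)%N) (t : filling a b) :
  row_standard t -> ninv t = chgF (sT t) b true.
Proof.
move=> Hrs.
rewrite /ninv card_set_sum sum_pair.
under eq_bigr => p _ do rewrite sum_pair.
rewrite sum_pair.
under eq_bigr => i _ do under eq_bigr => j _ do under eq_bigr => i0 _ do
  rewrite (col_collapse t (i, j) i0).
rewrite exchange_big /= /chgF -(sum_narrow hab (fun c => (sT t c != (if (c.+1 < b)%N then sT t c.+1 else true)) : nat)).
apply: eq_bigr => c _.
rewrite sum_I2 sum_I2 sum_I2 -column_lemma //.
have Hd : forall r : 'I_2, inversion_pair t (r, c) (r, c) = false.
  by move=> r; rewrite /inversion_pair eqxx /= !andbF.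
by rewrite /= !Hd add0n addn0.
Qed.


Lemma count_lt a L : (L <= a)%N -> (\sum_(c < a) (c < L)%N : nat)%N = L.
Proof.
move=> HL.
transitivity (\sum_(c < a) (if (c < L)%N then 1 else 0))%N.
  by apply: eq_bigr => c _; case: ifP.
by rewrite (sum_narrow HL (fun _ => 1%N)) sum1_card card_ord.
Qed.

Lemma card_shape a b (hab : (b <= a)%N) :
  #|[set x : 'I_2 * 'I_a | in_shape b x]| = (a + b)%N.
Proof.
rewrite card_set_sum sum_pair sum_I2 /in_shape /row_len /=.
by rewrite !count_lt.
Qed.

Lemma rs_nz a b (t : filling a b) x : row_standard t -> in_shape b x -> nat_of_ord (t x) != 0%N.
Proof. by case/andP=> /andP[/andP[_ /forallP H] _] _ Hx; have := H x; rewrite Hx. Qed.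

Lemma rs_z a b (t : filling a b) x : row_standard t -> ~~ in_shape b x -> nat_of_ord (t x) = 0%N.
Proof. by case/andP=> /andP[/andP[/forallP H _] _] _ Hx; have := H x; rewrite Hx => /eqP. Qed.

Lemma rs_mono a b (t : filling a b) x y : row_standard t -> in_shape b x -> in_shape b y ->
  x.1 = y.1 -> (x.2 < y.2)%N -> (nat_of_ord (t x) < nat_of_ord (t y))%N.
Proof.
case/andP=> _ /forallP H Hx Hy H1 H2.
by have /forallP/(_ y) := H x; rewrite Hx Hy H1 eqxx H2.
Qed.

Lemma rs_surj a b (hab : (b <= a)%N) (t : filling a b) k : row_standard t -> (k < a + b)%N ->
  exists2 x, in_shape b x & nat_of_ord (t x) = k.+1.
Proof.
move=> Hrs Hk.
set Sh := [set x : 'I_2 * 'I_a | in_shape b x].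
have Hsub : t @: Sh \subset [set~ ord0].
  apply/subsetP => v /imsetP[x]; rewrite inE => Hx ->.
  rewrite !inE; apply/negP => /eqP H.
  by have := rs_nz Hrs Hx; rewrite H.
have Heq : t @: Sh = [set~ ord0].
  apply/eqP; rewrite eqEcard Hsub /= cardsC1 card_ord /=.
  rewrite card_in_imset ?card_shape //.
  move=> x y; rewrite !inE => Hx Hy; exact: (rs_injP Hrs).
have : (inord k.+1 : 'I_(a + b).+1) \in [set~ ord0].
  by rewrite !inE; apply/negP => /eqP/(congr1 val); rewrite /= inordK.
rewrite -Heq => /imsetP[x]; rewrite inE => Hx Htx.
by exists x => //; rewrite -Htx inordK.
Qed.

Definition Psi a b (w : seq bool) : filling a b :=
  [ffun x => if in_shape b x then inord (nth 0%N (pos (nat_of_ord x.1 == 1%N) w) x.2).+1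
             else ord0].

Definition Phi a b (t : filling a b) : (a + b).-tuple bool :=
  [tuple [exists x, [&& in_shape b x, nat_of_ord x.1 == 1%N & nat_of_ord (t x) == k.+1]]
   | k < a + b].

Lemma nth_Phi a b (t : filling a b) k : (k < a + b)%N ->
  nth false (Phi t) k =
  [exists x, [&& in_shape b x, nat_of_ord x.1 == 1%N & nat_of_ord (t x) == k.+1]].
Proof. by move=> Hk; rewrite (nth_mktuple _ _ (Ordinal Hk)). Qed.

Definition goodw a b (w : seq bool) := (size w == a + b)%N && (diff w == (a%:Z - b%:Z)%R).

Lemma goodw_counts a b w : goodw a b w -> count id w = b /\ count negb w = a.
Proof.
case/andP=> /eqP Hs /eqP Hd; have := cnt_size w; rewrite Hs; move: Hd; rewrite /diff.
by lia.
Qed.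

Lemma I2_cases (r : 'I_2) : nat_of_ord r = 0%N \/ nat_of_ord r = 1%N.
Proof. by case: r => [[|[|n]] Hr] /=; auto. Qed.

Lemma size_pos_row a b w (r : 'I_2) : goodw a b w ->
  size (pos (nat_of_ord r == 1%N) w) = row_len a b r.
Proof.
move=> /goodw_counts [HT HF]; rewrite /row_len.
by case: (I2_cases r) => ->; rewrite /= ?size_posF ?size_posT.
Qed.

Lemma Psi_val a b w x : goodw a b w -> in_shape b x ->
  nat_of_ord (Psi a b w x) = (nth 0%N (pos (nat_of_ord x.1 == 1%N) w) x.2).+1.
Proof.
move=> Hw Hx; rewrite ffunE Hx inordK // ltnS.
have Hs : (x.2 < size (pos (nat_of_ord x.1 == 1%N) w))%N by rewrite (size_pos_row _ Hw).
case/andP: Hw => /eqP Hsz _; by rewrite -Hsz; apply: pos_lt.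
Qed.

Lemma Psi_valv a b w x : goodw a b w -> in_shape b x ->
  val (Psi a b w x) = (nth 0%N (pos (nat_of_ord x.1 == 1%N) w) x.2).+1.
Proof. exact: Psi_val. Qed.

Lemma Psi_rs a b w : goodw a b w -> row_standard (Psi a b w).
Proof.
move=> Hw.
have Hs : forall x : 'I_2 * 'I_a, in_shape b x -> (x.2 < size (pos (nat_of_ord x.1 == 1%N) w))%N.
  by move=> x Hx; rewrite (size_pos_row _ Hw).
apply/andP; split; [apply/andP; split; [apply/andP; split|] |].
- by apply/forallP => x; apply/implyP => Hx; rewrite ffunE (negbTE Hx).
- by apply/forallP => x; apply/implyP => Hx; change (nat_of_ord (Psi a b w x) != 0%N); rewrite Psi_val.
- apply/forallP => x; apply/forallP => y; apply/implyP => /and3P[Hx Hy /eqP Hxy].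
  have := congr1 (@nat_of_ord _) Hxy; rewrite !Psi_val // => -[Hk].
  have Hr : nat_of_ord x.1 = nat_of_ord y.1.
    have := pos_nth (Hs x Hx); have := pos_nth (Hs y Hy); rewrite Hk => -> /eqP.
    by case: (I2_cases x.1) => ->; case: (I2_cases y.1) => ->.
  have Hr' : x.1 = y.1 by apply: val_inj.
  have Hc : nat_of_ord x.2 = nat_of_ord y.2.
    move: Hk (Hs x Hx) (Hs y Hy); rewrite Hr'.
    case: (ltngtP x.2 y.2) => // H Hk H1 H2.
      by have := pos_mono H H2; rewrite Hk ltnn.
    by have := pos_mono H H1; rewrite Hk ltnn.
  apply/eqP; move: Hr' Hc; case: x {Hx Hxy Hr Hk} => [r c]; case: y {Hy} => [r' c'] /= -> Hc.
  by congr pair; apply: val_inj.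
- apply/forallP => x; apply/forallP => y; apply/implyP => /and4P[Hx Hy /eqP H1 H2].
  rewrite !Psi_valv // ltnS -H1; apply: pos_mono => //.
  by rewrite H1; exact: Hs.
Qed.

Lemma Phi_Psi a b (hab : (b <= a)%N) w : goodw a b w -> val (Phi (Psi a b w)) = w.
Proof.
move=> Hw; have Hsz : size w = (a + b)%N by case/andP: Hw => /eqP.
have [HT HF] := goodw_counts Hw.
apply: (@eq_from_nth _ false); first by rewrite size_tuple Hsz.
move=> k; rewrite size_tuple => Hk; rewrite nth_Phi //.
apply/existsP/idP.
  move=> [x /and3P[Hx /eqP H1 /eqP Hv]].
  move: Hv; rewrite Psi_val // H1 /= => -[<-].
  apply: (@pos_nth true w x.2).
  by move: (size_pos_row ord_max Hw) Hx; rewrite /in_shape /row_len H1 /= => ->.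
move=> Hwk.
have Hkin : k \in pos true w by rewrite mem_pos Hsz Hk Hwk.
have Hc : (index k (pos true w) < b)%N by rewrite -HT -size_posT index_mem.
have Hca : (index k (pos true w) < a)%N by apply: leq_trans Hc hab.
exists (ord_max, Ordinal Hca).
have Hsh : in_shape b (ord_max : 'I_2, Ordinal Hca) by [].
by rewrite Hsh /= Psi_val //= nth_index.
Qed.

Lemma entry_row a b (t : filling a b) (r : 'I_2) c (Hca : (c < a)%N) :
  (c < row_len a b r)%N -> entry t r c = Some (nat_of_ord (t (r, Ordinal Hca))).
Proof. by move=> Hc; apply: (entry_some t (x := (r, Ordinal Hca))). Qed.

Lemma row_len_le a b (hab : (b <= a)%N) (r : 'I_2) : (row_len a b r <= a)%N.
Proof. by rewrite /row_len; case: ifP. Qed.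

Definition rowf a b (t : filling a b) (r : nat) (c : nat) : nat := (odflt 0%N (entry t r c)).-1.

Lemma rowf_val a b (t : filling a b) (x : 'I_2 * 'I_a) : row_standard t -> in_shape b x ->
  (rowf t x.1 x.2).+1 = nat_of_ord (t x).
Proof.
move=> Hrs Hx; rewrite /rowf (entry_some t Hx) /= prednK //.
by rewrite lt0n; apply: rs_nz.
Qed.

Lemma pos_Phi a b (hab : (b <= a)%N) (t : filling a b) (r : 'I_2) : row_standard t ->
  pos (nat_of_ord r == 1%N) (Phi t) = [seq rowf t r c | c <- iota 0 (row_len a b r)].
Proof.
move=> Hrs.
have Hinj := rs_injP Hrs.
pose E k := [exists x, [&& in_shape b x, x.1 == r & nat_of_ord (t x) == k.+1]].
have HE : forall k, (k \in [seq rowf t r c | c <- iota 0 (row_len a b r)]) = E k.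
  move=> k; apply/mapP/existsP.
    move=> [c]; rewrite mem_iota /= => Hc ->.
    have Hca : (c < a)%N by apply: leq_trans Hc (row_len_le hab r).
    exists (r, Ordinal Hca).
    have Hx : in_shape b (r, Ordinal Hca) by [].
    by rewrite Hx eqxx /= -(rowf_val Hrs Hx).
  move=> [x /and3P[Hx /eqP H1 /eqP H2]].
  exists (nat_of_ord x.2); first by rewrite mem_iota /= -H1.
  by apply/eq_add_S; rewrite -H1 rowf_val // H2.
apply: (irr_sorted_eq ltn_trans ltnn); first exact: sorted_pos.
  apply: (homo_sorted_in (P := fun c => (c < row_len a b r)%N)); last exact: iota_ltn_sorted.
    move=> i j Hi Hj Hij.
    have Hia : (i < a)%N by apply: leq_trans Hi (row_len_le hab r).
    have Hja : (j < a)%N by apply: leq_trans Hj (row_len_le hab r).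
    have Hxi : in_shape b (r, Ordinal Hia) by [].
    have Hxj : in_shape b (r, Ordinal Hja) by [].
    rewrite -ltnS (rowf_val Hrs Hxi) -ltnS (rowf_val Hrs Hxj) /=.
    rewrite ltnS; exact: (rs_mono Hrs Hxi Hxj).
  by apply/allP => c; rewrite mem_iota.
move=> k; rewrite HE mem_pos size_tuple.
apply/idP/idP.
  case/andP => Hk; rewrite nth_Phi // => /eqP HP.
  have [x Hx Hv] := rs_surj hab Hrs Hk.
  apply/existsP; exists x; rewrite Hx Hv eqxx andbT /=.
  apply/eqP; apply: ord_inj.
  case: (I2_cases r) => Hr; rewrite Hr /= in HP.
    case: (I2_cases x.1) => Hx1; first by rewrite Hx1 Hr.
    have : [exists y, [&& in_shape b y, nat_of_ord y.1 == 1%N & nat_of_ord (t y) == k.+1]].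
      by apply/existsP; exists x; rewrite Hx Hx1 Hv !eqxx.
    by rewrite HP.
  case/existsP: HP => y /and3P[Hy /eqP Hy1 /eqP Hyv].
  have Hyx : y = x by apply: Hinj => //; apply: ord_inj; rewrite Hyv Hv.
  by rewrite -Hyx Hy1 Hr.
move/existsP => [x /and3P[Hx /eqP H1 /eqP H2]].
have Hk : (k < a + b)%N by have := ltn_ord (t x); rewrite H2 ltnS.
rewrite Hk nth_Phi //=.
case: (I2_cases r) => Hr; rewrite Hr.
  rewrite (_ : (0 == 1)%N = false) // eqbF_neg.
  apply/negP => /existsP[y /and3P[Hy /eqP Hy1 /eqP Hyv]].
  have Hyx : y = x by apply: Hinj => //; apply: ord_inj; rewrite Hyv H2.
  by move: Hy1; rewrite Hyx H1 Hr.
rewrite eqxx eqb_id.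
by apply/existsP; exists x; rewrite Hx H1 Hr H2 !eqxx.
Qed.

Lemma Phi_good a b (hab : (b <= a)%N) (t : filling a b) : row_standard t -> goodw a b (Phi t).
Proof.
move=> Hrs.
have H1 := pos_Phi hab ord_max Hrs; have H0 := pos_Phi hab ord0 Hrs.
have HT : count id (Phi t) = b.
  by rewrite -size_posT; move: H1 => /= ->; rewrite size_map size_iota.
have HF : count negb (Phi t) = a.
  by rewrite -size_posF; move: H0 => /= ->; rewrite size_map size_iota.
apply/andP; split; first by rewrite size_tuple.
by rewrite /diff HT HF.
Qed.

Lemma Psi_Phi a b (hab : (b <= a)%N) (t : filling a b) : row_standard t -> Psi a b (Phi t) = t.
Proof.
move=> Hrs; have Hg := Phi_good hab Hrs.
apply/ffunP => x; apply: ord_inj.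
case: (boolP (in_shape b x)) => Hx.
  rewrite Psi_val // pos_Phi // (nth_map 0%N); last by rewrite size_iota.
  by rewrite nth_iota // rowf_val.
by rewrite ffunE (negbTE Hx) rs_z.
Qed.

Lemma sT_Psi a b (hab : (b <= a)%N) w c : goodw a b w -> (c < b)%N -> sT (Psi a b w) c = sgn w c.
Proof.
move=> Hw Hc.
have Hca : (c < a)%N by apply: leq_trans Hc hab.
have [HT HF] := goodw_counts Hw.
have Hx0 : in_shape b (ord0 : 'I_2, Ordinal Hca) by [].
have Hx1 : in_shape b (ord_max : 'I_2, Ordinal Hca) by [].
rewrite /sT (entry_some _ Hx0) (entry_some _ Hx1) /= !Psi_val //= ltnS /sgn.
rewrite (_ : (0 == 1)%N = false) // (_ : (1 == 1)%N = true) //.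
congr (_ < _)%N; apply: set_nth_default; by rewrite ?size_posT ?size_posF ?HT ?HF.
Qed.

Lemma ninv_Psi a b (hab : (b <= a)%N) w : goodw a b w -> ninv (Psi a b w) = chgW true w.
Proof.
move=> Hw; have [HT HF] := goodw_counts Hw.
rewrite (ninv_formula hab (Psi_rs Hw)) /chgW HT /chgF.
apply: eq_bigr => c _; rewrite sT_Psi //.
by case: ifP => // Hc; rewrite sT_Psi.
Qed.

Local Open Scope ring_scope.



Lemma sum_select' (V : nmodType) M m (F : nat -> V) (c : bool) : (c -> m < M)%N ->
  \sum_(0 <= i < M) (if c && (m == i) then F i else 0) = if c then F m else 0.
Proof.
case: c => H; first exact: sum_select (H isT).
by rewrite big1.
Qed.

Lemma chgF_le f m sg : (chgF f m sg <= m)%N.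
Proof.
rewrite /chgF -[X in (_ <= X)%N](card_ord m) -sum1_card.
by apply: leq_sum => i _; exact: leq_b1.
Qed.

Lemma LHS_eq a b (hab : (b <= a)%N) :
  \sum_(0 <= k < ((a + b) ^ 2).+1) (#|S_k a b k|%:R : int) *: 'X^k
  = Lp (a + b) (a%:Z - b%:Z) true :> {poly int}.
Proof.
under eq_bigr => k _ do rewrite scaler_nat -sumr_const big_mkcond /=.
rewrite exchange_big /=.
have H : forall t : filling a b,
  \sum_(0 <= i < ((a + b) ^ 2).+1) (if t \in S_k a b i then 'X^i else 0)
  = (if row_standard t then 'X^(ninv t) else 0 : {poly int}).
  move=> t; under eq_bigr => i _ do rewrite inE.
  rewrite (@sum_select' _ _ (ninv t) (fun i => 'X^i) (row_standard t)) // => Hrs.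
  rewrite (ninv_formula hab Hrs) ltnS.
  apply: leq_trans (chgF_le _ _ _) _.
  rewrite expnS expn1; nia.
under eq_bigr => t _ do rewrite H.
rewrite -big_mkcond /=.
pose B := [set w : (a + b).-tuple bool | goodw a b w].
pose Ps := fun w : (a + b).-tuple bool => Psi a b w.
have HRS : [set t : filling a b | row_standard t] = Ps @: B.
  apply/setP => t; rewrite inE; apply/idP/imsetP.
    move=> Hrs; exists (Phi t); first by rewrite inE; exact: Phi_good.
    by rewrite /Ps Psi_Phi.
  by move=> [w]; rewrite inE => Hw ->; exact: Psi_rs.
rewrite (eq_bigl (fun t => t \in [set t : filling a b | row_standard t])); last first.
  by move=> t; rewrite inE.
rewrite HRS big_imset /=; last first.
  move=> w1 w2; rewrite !inE => H1 H2 Heq; apply: val_inj.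
  change (tval w1 = tval w2).
  have E1 := Phi_Psi hab H1; have E2 := Phi_Psi hab H2.
  rewrite /Ps in Heq; rewrite Heq in E1.
  by rewrite -E1 -[in RHS]E2.
rewrite -Lsum (eq_bigr (fun w : (a + b).-tuple bool => 'X^(chgW true w))); last first.
  by move=> w; rewrite inE => Hw; rewrite /Ps ninv_Psi.
rewrite big_mkcond /=.
pose G := fun s : seq bool => if goodw a b s then 'X^(chgW true s) else 0 : {poly int}.
transitivity (\sum_(p : (a + b).-tuple bool) G (tval p)).
  by apply: eq_bigr => w _; rewrite inE.
rewrite sum_tuple_allw !big_seq; apply: eq_bigr => s; rewrite mem_allw => Hs.
by rewrite /G /goodw Hs.
Qed.

Theorem mainTheorem10 (a b : nat) (hab : (b <= a)%N) (hb : (1 <= b)%N) :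
  \sum_(0 <= k < ((a + b) ^ 2).+1) (#|S_k a b k|%:R : int) *: 'X^k
  = \sum_(0 <= i < (a + b).+1) (#|D_i a b i|%:R : int) *: (1 + 'X) ^+ i
  :> {poly int}.
Proof.
rewrite LHS_eq // RHS_eq LR.
have -> : (0 <= a%:Z - b%:Z) by lia.
by [].
Qed.
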